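(* Let $G$ be a unit square graph with $V(G)\neq\emptyset$. Then there is a vertex $v\in V(G)$ such that $G[N[v]]$ is a unit interval graph.
   Context: A unit square graph is a graph $G$ admitting $f\colon V(G)\to\mathbb{R}^2$ with $vw\in E(G)$ iff $\|f(v)-f(w)\|_\infty\le1$ for distinct $v,w$. $N[v]=N(v)\cup\{v\}$ is the closed neighborhood. A unit interval graph is an intersection graph of unit-length intervals on the real line. *)

(* Defs.v *)
From mathcomp Require Import all_boot.
From Stdlib Require Import Reals.
Set Implicit Arguments. Unset Strict Implicit. Unset Printing Implicit Defensive.

Definition simple_graph (T : finType) (e : rel T) : Prop :=
  (forall x y, e x y = e y x) /\ (forall x, e x x = false).

Definition dist_inf (p q : R * R) : R :=
  Rmax (Rabs (fst p - fst q)) (Rabs (snd p - snd q)).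

Definition unit_square_graph (T : finType) (e : rel T) : Prop :=
  exists f : T -> R * R,
    forall v w : T, v <> w -> (e v w <-> (dist_inf (f v) (f w) <= 1)%R).

(* The induced subgraph G[S] is a unit interval graph: an intersection graph
   of unit-length closed intervals [g u, g u + 1], i.e. two distinct vertices
   of S are adjacent iff |g u - g w| <= 1. *)
Definition induced_unit_interval (T : finType) (e : rel T) (S : pred T) : Prop :=
  exists g : T -> R,
    forall u w : T, S u -> S w -> u <> w ->
      (e u w <-> (Rabs (g u - g w) <= 1)%R).

Definition closed_nbhd (T : finType) (e : rel T) (v : T) : pred T :=
  fun u => (u == v) || e v u.

(* Main.v *)
Require Import Defs.
From mathcomp Require Import all_boot.
From Stdlib Require Import Reals Lra.

Lemma exists_min (T : eqType) (h : T -> R) (s : seq T) (x0 : T) :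
  x0 \in s -> exists x, x \in s /\ forall y, y \in s -> (h x <= h y)%R.
Proof.
elim: s x0 => [//|a s IH] x0 _.
case: (boolP (x0 \in s)) => Hs.
- have [x [Hx Hm]] := IH x0 Hs.
  destruct (Rle_dec (h a) (h x)) as [Hle|Hlt].
  + exists a; split; first by rewrite inE eqxx.
    move=> y; rewrite inE => /orP [/eqP ->|Hy]; first lra.
    have := Hm y Hy; lra.
  + exists x; split; first by rewrite inE Hx orbT.
    move=> y; rewrite inE => /orP [/eqP ->|Hy]; first lra.
    exact: Hm.
- case: s IH Hs => [|b s] IH Hs.
  + exists a; split; first by rewrite inE eqxx.
    by move=> y; rewrite inE => /eqP ->; lra.
  + have [x [Hx Hm]] := IH b (mem_head b s).
    destruct (Rle_dec (h a) (h x)) as [Hle|Hlt].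
    * exists a; split; first by rewrite inE eqxx.
      move=> y; rewrite inE => /orP [/eqP ->|Hy]; first lra.
      have := Hm y Hy; lra.
    * exists x; split; first by rewrite inE Hx orbT.
      move=> y; rewrite inE => /orP [/eqP ->|Hy]; first lra.
      exact: Hm.
Qed.

Theorem mainTheorem5 (T : finType) (e : rel T) :
  simple_graph e -> unit_square_graph e -> 0 < #|T| ->
  exists v : T, induced_unit_interval e (closed_nbhd e v).
Proof.
move=> [Hsym Hirr] [f Hf] Hcard.
have [x0 _] : exists x0 : T, true.
  by case/card_gt0P: Hcard => x _; exists x.
have Hx0 : x0 \in enum T by rewrite mem_enum.
have [v [_ Hv]] := @exists_min T (fun x => fst (f x)) _ x0 Hx0.
exists v; exists (fun x => snd (f x)).
have Hn : forall u, closed_nbhd e v u ->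
   (fst (f v) <= fst (f u) /\ fst (f u) <= fst (f v) + 1)%R.
  move=> u; rewrite /closed_nbhd => /orP [/eqP ->|Heu].
  - lra.
  - split; first by apply: Hv; rewrite mem_enum.
    have Hne : v <> u by move=> E; rewrite E Hirr in Heu.
    have := proj1 (Hf v u Hne) Heu.
    rewrite /dist_inf => H.
    have := Rle_trans _ _ _ (Rmax_l _ _) H.
    rewrite /Rabs; case: Rcase_abs => ? ?; lra.
move=> u w Hu Hw Huw.
have [Hu1 Hu2] := Hn u Hu; have [Hw1 Hw2] := Hn w Hw.
rewrite (Hf u w Huw) /dist_inf; split => H.
- exact: Rle_trans _ _ _ (Rmax_r _ _) H.
- apply: Rmax_lub => //.
  apply: Rabs_le; lra.
Qed.
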